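(* Fix $\alpha\in(0,1)$ and $p,q\in[0,1]$ with $q=\alpha p$. Then the set function $\mathcal{M}\mapsto R(p,q,\mathcal{M})$, defined on subsets $\mathcal{M}\subseteq\widetilde{S}(q)$, is monotonically non-decreasing and submodular.
   Context: Let $\mathcal{G}=(\mathcal{U},\mathcal{E})$ be a finite directed graph without self-loops, $\mathcal{U}=\{1,\dots,U\}$. For $u,v\in\mathcal{U}$, $D(u,v;\mathcal{G})$ denotes the number of edges of a shortest directed path from $u$ to $v$ in $\mathcal{G}$, with $D(u,v;\mathcal{G})=+\infty$ if there is no such path. For an integer $d\ge0$, the $d$-visible set of $u$ is $\mathcal{V}(u,d;\mathcal{G})=\{v\in\mathcal{U}: D(v,u;\mathcal{G})\le d\}$. Fix an integer social visibility threshold $\tau\ge1$. Let $\mathcal{R}\subseteq\mathcal{U}$ (requesters) and $\mathcal{S}\subseteq\mathcal{U}$ (suppliers) be disjoint. Each requester $u\in\mathcal{R}$ has a valuation $p_u\in[0,1]$ and each supplier $u\in\mathcal{S}$ has a valuation $q_u\in[0,1]$. For $p\in[0,1]$ let $\widetilde{R}(p)=\{u\in\mathcal{R}: p_u\ge p\}$ and for $q\in[0,1]$ let $\widetilde{S}(q)=\{u\in\mathcal{S}: q_u\le q\}$. For $\mathcal{M}\subseteq\mathcal{S}$ let $\widetilde{G}(p,\mathcal{M})$ be the graph obtained from $\mathcal{G}$ by adding a directed edge from every $s\in\mathcal{M}$ to every $r\in\widetilde{R}(p)$. For $u\in\widetilde{R}(p)$ let $I_u(p,\mathcal{M})=|\mathcal{V}(u,\tau;\widetilde{G}(p,\mathcal{M}))\setminus\mathcal{V}(u,\tau;\mathcal{G})|$,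 and $I(p,\mathcal{M})=\sum_{u\in\widetilde{R}(p)}I_u(p,\mathcal{M})$. The revenue is $R(p,q,\mathcal{M})=p\,I(p,\mathcal{M})-q\,I(p,\mathcal{M})$; when $q=\alpha p$ this equals $(1-\alpha)p\,I(p,\mathcal{M})$. *)

(* Defs.v *)
From mathcomp Require Import all_boot all_order all_algebra.
Set Implicit Arguments. Unset Strict Implicit. Unset Printing Implicit Defensive.
Import Order.TTheory GRing.Theory Num.Theory.

(* Directed graph on a finite vertex type T, given by its edge relation e.
   [dist_le e v u d] : "D(v,u;G) <= d", i.e. there is a directed path
   v = x0 -> x1 -> ... -> xk = u with k <= d edges (a shortest one then
   has at most d edges; if there is no path, D = +oo and this is false). *)
Definition dist_le (T : finType) (e : rel T) (v u : T) (d : nat) : bool :=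
  [exists k : 'I_d.+1, exists s : k.-tuple T, path e v s && (last v s == u)].

Definition visible (T : finType) (e : rel T) (u : T) (d : nat) : {set T} :=
  [set v | dist_le e v u d].

Local Open Scope ring_scope.
Section Market.
Variables (F : realFieldType) (T : finType).

Definition Rtilde (Rq : {set T}) (pv : T -> F) (p : F) : {set T} :=
  [set u in Rq | p <= pv u].

Definition Stilde (Sq : {set T}) (qv : T -> F) (q : F) : {set T} :=
  [set u in Sq | qv u <= q].

Definition aug_edge (e : rel T) (Rq : {set T}) (pv : T -> F) (p : F)
    (M : {set T}) : rel T :=
  fun x y => e x y || ((x \in M) && (y \in Rtilde Rq pv p)).

Definition Iu (e : rel T) (tau : nat) (Rq : {set T}) (pv : T -> F) (p : F)
    (M : {set T}) (u : T) : nat :=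
  #|visible (aug_edge e Rq pv p M) u tau :\: visible e u tau|.

Definition Itot (e : rel T) (tau : nat) (Rq : {set T}) (pv : T -> F) (p : F)
    (M : {set T}) : nat :=
  \sum_(u in Rtilde Rq pv p) Iu e tau Rq pv p M u.

Definition revenue (e : rel T) (tau : nat) (Rq : {set T}) (pv : T -> F)
    (p q : F) (M : {set T}) : F :=
  p * (Itot e tau Rq pv p M)%:R - q * (Itot e tau Rq pv p M)%:R.

End Market.

(* Main.v *)
Require Import Defs.
From mathcomp Require Import all_boot all_order all_algebra.
From mathcomp Require Import zify.
Import Order.TTheory GRing.Theory Num.Theory.
Local Open Scope ring_scope.

Lemma dist_leP (T : finType) (E : rel T) v u d :
  reflect (exists s, [/\ (size s <= d)%N, path E v s & last v s = u])
          (dist_le E v u d).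
Proof.
apply: (iffP existsP) => [[k /existsP [s /andP[Hp /eqP Hl]]]|[s [Hs Hp Hl]]].
  exists (val s); split => //; rewrite size_tuple -ltnS; exact: ltn_ord.
have Hs' : (size s < d.+1)%N by rewrite ltnS.
exists (Ordinal Hs'); apply/existsP; exists (in_tuple s) => /=.
by rewrite Hp Hl eqxx.
Qed.

Section Aux.
Variables (F : realFieldType) (T : finType) (e : rel T) (Rq : {set T})
  (pv : T -> F) (p : F) (tau : nat).

Local Notation aug M := (aug_edge e Rq pv p M).
Local Notation g M u := (visible (aug M) u tau).
Local Notation V0 u := (visible e u tau).

Lemma split_path (M : {set T}) x s : path (aug M) x s -> path e x s \/
  exists s0 r s1 s2, [/\ s0 \in M, r \in Rtilde Rq pv p, path e x s1,
     last x s1 = s0 & [/\ path e r s2, last r s2 = last x s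
     & (size s1 + size s2 < size s)%N]].
Proof.
elim: s x => [|y s IH] x /=; first by left.
case/andP => /orP[Hxy|/andP[HxM HyR]] /IH [Hp|[s0 [r [s1 [s2 [H1 H2 H3 H4 [H5 H6 H7]]]]]]].
- by left; rewrite Hxy Hp.
- right; exists s0, r, (y :: s1), s2.
  by split => //=; rewrite ?Hxy //; split => //; rewrite addSn ltnS.
- by right; exists x, y, [::], s; split => //.
- right; exists x, r, [::], s2; split => //=; split => //.
  lia.
Qed.

Lemma g_mono (M N : {set T}) u : M \subset N -> g M u \subset g N u.
Proof.
move=> MN; apply/subsetP => v; rewrite !inE => /dist_leP [s [Hs Hp Hl]].
apply/dist_leP; exists s; split => //.
apply: sub_path Hp => a b; rewrite /aug_edge => /orP[->//|/andP[Ha Hb]].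
by rewrite (subsetP MN _ Ha) Hb orbT.
Qed.

Lemma V0_sub (M : {set T}) u : V0 u \subset g M u.
Proof.
apply/subsetP => v; rewrite !inE => /dist_leP [s [Hs Hp Hl]].
apply/dist_leP; exists s; split => //.
by apply: sub_path Hp => a b Hab; rewrite /aug_edge Hab.
Qed.

Lemma g_split (M : {set T}) u v : v \in g M u -> v \notin V0 u ->
  exists2 s0, s0 \in M & v \in g [set s0] u.
Proof.
rewrite !inE => /dist_leP [s [Hs Hp Hl]] HV.
case: (@split_path M v s Hp) => [He|[s0 [r [s1 [s2 [H1 H2 H3 H4 [H5 H6 H7]]]]]]].
  by case/negP: HV; apply/dist_leP; exists s.
exists s0 => //; rewrite inE; apply/dist_leP; exists (s1 ++ r :: s2); split.
- rewrite size_cat /= addnS; exact: leq_trans H7 Hs.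
- rewrite cat_path /= H4 /aug_edge inE eqxx H2 orbT /=.
  apply/andP; split; [apply: sub_path H3|apply: sub_path H5];
    by move=> a b Hab; rewrite Hab.
- by rewrite last_cat /= H6 Hl.
Qed.

Lemma Iu_mono (M N : {set T}) u : M \subset N ->
  (Iu e tau Rq pv p M u <= Iu e tau Rq pv p N u)%N.
Proof.
move=> MN; rewrite /Iu; apply: subset_leq_card; apply: setSD; exact: g_mono.
Qed.

Lemma Iu_sub (A B : {set T}) x u : A \subset B -> x \notin B ->
  (Iu e tau Rq pv p (x |: B) u + Iu e tau Rq pv p A u <=
   Iu e tau Rq pv p (x |: A) u + Iu e tau Rq pv p B u)%N.
Proof.
move=> AB xB; rewrite /Iu.
set X := _ :\: _; set W := _ :\: _; set Z := _ :\: _; set Y := _ :\: _.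
have sYX : Y \subset X by apply: setSD; apply: g_mono; exact: subsetUr.
have sWZ : W \subset Z by apply: setSD; apply: g_mono; exact: subsetUr.
have sWY : W \subset Y by apply: setSD; apply: g_mono.
have key : X :\: Y \subset Z :\: W.
  apply/subsetP => v; rewrite in_setD => /andP[HnY HX].
  move: HX; rewrite /X in_setD => /andP[HV Hg].
  have [s0 Hs0M Hs0] := @g_split (x |: B) u v Hg HV.
  move: Hs0M; rewrite in_setU1 => /orP[/eqP Es|s0B].
    subst s0; rewrite !in_setD HV /=; apply/andP; split; last first.
      by apply: (subsetP (@g_mono [set x] (x |: A) u _)) Hs0; rewrite sub1set setU11.
    apply: contra HnY; rewrite in_setD HV /= => HA.
    exact: (subsetP (@g_mono A B u AB)).
  case/negP: HnY; rewrite in_setD HV /=.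
  by apply: (subsetP (@g_mono [set s0] B u _)) Hs0; rewrite sub1set.
have cX := cardsID Y X; have cZ := cardsID W Z.
rewrite (setIidPr sYX) in cX; rewrite (setIidPr sWZ) in cZ.
have := subset_leq_card key; have := subset_leq_card sWY.
rewrite -cX -cZ; lia.
Qed.

End Aux.

Theorem theorem2 (F : realFieldType) (T : finType) (e : rel T)
    (tau : nat) (Rq Sq : {set T}) (pv qv : T -> F) (alpha p q : F) :
  irreflexive e ->
  (1 <= tau)%N ->
  [disjoint Rq & Sq] ->
  (forall u, u \in Rq -> 0 <= pv u <= 1) ->
  (forall u, u \in Sq -> 0 <= qv u <= 1) ->
  0 < alpha < 1 -> 0 <= p <= 1 -> 0 <= q <= 1 -> q = alpha * p ->
  let f := revenue e tau Rq pv p q in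
  (* monotonically non-decreasing on subsets of S~(q) *)
  (forall M1 M2 : {set T},
      M1 \subset M2 -> M2 \subset Stilde Sq qv q -> f M1 <= f M2) /\
  (* submodular (diminishing returns) on subsets of S~(q) *)
  (forall (A B : {set T}) (x : T),
      A \subset B -> B \subset Stilde Sq qv q ->
      x \in Stilde Sq qv q -> x \notin B ->
      f (x |: B) - f B <= f (x |: A) - f A).
Proof.
move=> _ _ _ _ _ /andP[a0 a1] /andP[p0 _] _ qE f.
have pq : 0 <= p - q.
  rewrite qE -{1}(mul1r p) -mulrBl; apply: mulr_ge0 => //; by rewrite subr_ge0 ltW.
have fE M : f M = (p - q) * (Itot e tau Rq pv p M)%:R.
  by rewrite /f /revenue mulrBl.
split.
  move=> M1 M2 M12 _; rewrite !fE ler_wpM2l // ler_nat.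
  by apply: leq_sum => u _; apply: Iu_mono.
move=> A B x AB _ _ xB; rewrite !fE -!mulrBr; apply: ler_wpM2l => //.
have H : (Itot e tau Rq pv p (x |: B) + Itot e tau Rq pv p A <=
          Itot e tau Rq pv p (x |: A) + Itot e tau Rq pv p B)%N.
  rewrite /Itot -!big_split /=.
  by apply: leq_sum => u _; apply: Iu_sub.
move: H; rewrite -(ler_nat F) !natrD => H.
by rewrite lerBlDr addrAC lerBrDr.
Qed.
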